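(* The logarithmic partial negativity $\hat N_l(\rho)=\log_2[\hat N(\rho)+1]$ is not monogamous: for the state $|\widetilde\Omega\rangle^{ABC}=\lambda_0|0\rangle|00\rangle+\lambda_1|1\rangle|10\rangle+\lambda_2|2\rangle|11\rangle$ with $\lambda_0\ge\lambda_1\ge\lambda_2>0$, $\sum\lambda_i^2=1$, one has $\hat N_l(|\widetilde\Omega\rangle^{A|BC})=\hat N_l(\rho^{AB})=\log_2(1+\lambda_0\lambda_1)$ while $\hat N_l(\rho^{AC})=\log_2(1+\lambda_1\lambda_2)>0$.
   Context: $\hat N(\rho)$ is the operator norm of the negative part of the partial transpose $\rho^{T_A}$ (the absolute value of its most negative eigenvalue, or $0$ if $\rho^{T_A}\ge0$). For a tripartite state, $E(A|BC)$ is the measure across the cut $A$ versus $BC$; $\rho^{AB},\rho^{AC}$ are reduced states. A measure $E$ is monogamous if $E(A|BC)=E(AB)$ always implies $E(AC)=0$. *)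

(* Defs.v *)
From HB Require Import structures.
From mathcomp Require Import all_boot all_order all_algebra.
From mathcomp Require Import complex.
From mathcomp Require Import reals exp.

Set Implicit Arguments.
Unset Strict Implicit.
Unset Printing Implicit Defensive.

Import Order.TTheory GRing.Theory Num.Theory.
Local Open Scope ring_scope.
Local Open Scope complex_scope.

Section Defs.
Variable R : realType.
Local Notation C := (R[i]).

(* an operator on the finite-dimensional Hilbert space C^T, as a kernel T x T -> C *)
Definition op (T : finType) := T -> T -> C.

Definition mx_of (T : finType) (rho : op T) : 'M[C]_#|T| :=
  \matrix_(i, j) rho (enum_val i) (enum_val j).

(* the eigenvalues (with multiplicity) of a square complex matrix:
   the roots of its characteristic polynomial *)
Definition spectrum n (M : 'M[C]_n) : seq C :=
  sval (closed_field_poly_normal (char_poly M)).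

Definition ptA (TA TB : finType) (rho : op (TA * TB)%type) : op (TA * TB)%type :=
  fun x y => rho (y.1, x.2) (x.1, y.2).

(* \hat N(rho): absolute value of the most negative eigenvalue of rho^{T_A},
   or 0 if rho^{T_A} >= 0.  (Eigenvalues of the Hermitian matrix rho^{T_A}
   are real; Re is only used to land in R.) *)
Definition Nhat (TA TB : finType) (rho : op (TA * TB)%type) : R :=
  \big[Num.max/0]_(a <- spectrum (mx_of (ptA rho))) (- complex.Re a).

Definition log2 (x : R) : R := ln x / ln 2.

Definition Nhat_l (TA TB : finType) (rho : op (TA * TB)%type) : R :=
  log2 (Nhat rho + 1).

Definition is_density (T : finType) (rho : op T) : Prop :=
  [/\ forall x y, rho y x = conjc (rho x y),
      forall v : T -> C, 0 <= \sum_x \sum_y conjc (v x) * rho x y * v y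
    & \sum_x rho x x = 1].

Definition pure (T : finType) (psi : T -> C) : op T :=
  fun x y => psi x * conjc (psi y).

Definition trC (TA TB TC : finType) (rho : op (TA * (TB * TC))%type) : op (TA * TB)%type :=
  fun x y => \sum_(c : TC) rho (x.1, (x.2, c)) (y.1, (y.2, c)).

Definition trB (TA TB TC : finType) (rho : op (TA * (TB * TC))%type) : op (TA * TC)%type :=
  fun x y => \sum_(b : TB) rho (x.1, (b, x.2)) (y.1, (b, y.2)).

(* monogamy of a bipartite measure E (the operator on A x (B x C) is
   literally the bipartite state across the cut A|BC) *)
Definition monogamous (E : forall TA TB : finType, op (TA * TB)%type -> R) : Prop :=
  forall (TA TB TC : finType) (rho : op (TA * (TB * TC))%type),
    is_density rho -> E _ _ rho = E _ _ (trC rho) -> E _ _ (trB rho) = 0.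

Definition Omega (l0 l1 l2 : R) : ('I_3 * ('I_2 * 'I_2))%type -> C :=
  fun x =>
    let: (a, (b, c)) := x in
    if [&& val a == 0%N, val b == 0%N & val c == 0%N] then l0%:C
    else if [&& val a == 1%N, val b == 1%N & val c == 0%N] then l1%:C
    else if [&& val a == 2%N, val b == 1%N & val c == 1%N] then l2%:C
    else 0.

End Defs.

(* Main.v *)
Require Import Defs.
From HB Require Import structures.
From mathcomp Require Import all_boot all_order all_algebra.
From mathcomp Require Import complex.
From mathcomp Require Import reals exp.
From mathcomp Require Import ring lra.

Import Order.TTheory GRing.Theory Num.Theory.
Local Open Scope ring_scope.

Section G.
Local Open Scope complex_scope.
Variable R : realType.
Local Notation C := (R[i]).

Lemma mem_spectrum n (M : 'M[C]_n) z : (z \in spectrum M) = eigenvalue M z.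
Proof.
rewrite eigenvalue_root_char /spectrum; case: closed_field_poly_normal => r /= E.
by rewrite [in RHS]E (monicP (char_poly_monic M)) scale1r root_prod_XsubC.
Qed.

Lemma sum_enum (T : finType) (F : T -> C) :
  \sum_(i < #|T|) F (enum_val i) = \sum_x F x.
Proof. rewrite -big_enum_val /=; apply: eq_bigl => x; by rewrite inE. Qed.

Lemma sqnorm_ge0 (p : C) : 0 <= conjc p * p.
Proof. by rewrite mulrC mulcJ_ge0. Qed.

Lemma Nhat_char (TA TB : finType) (P : op R (TA * TB)%type) (m : R) :
  0 <= m ->
  (exists2 w : (TA * TB)%type -> C, (exists x, w x != 0) &
      forall y, \sum_x w x * ptA P x y = - m%:C * w y) ->
  (forall u : (TA * TB)%type -> C,
      0 <= \sum_x \sum_y conjc (u x) * ptA P x y * u y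
           + m%:C * \sum_x conjc (u x) * u x) ->
  Nhat P = m.
Proof.
move=> m0 [w [x0 wx0] Hw] Hq; apply/le_anti/andP; split.
  rewrite /Nhat big_seq; apply: bigmax_le => // a /[!mem_spectrum] /eigenvalueP [v Hv vnz].
  pose u x := conjc (v 0 (enum_rank x)).
  pose S := \sum_x conjc (u x) * u x.
  have HQ : \sum_x \sum_y conjc (u x) * ptA P x y * u y = a * S.
    rewrite exchange_big /S mulr_sumr; apply: eq_bigr => y _.
    rewrite -mulr_suml.
    have -> : \sum_i conjc (u i) * ptA P i y = (v *m mx_of (ptA P)) 0 (enum_rank y).
      rewrite mxE -(@sum_enum _ (fun x => conjc (u x) * ptA P x y)).
      apply: eq_bigr => i _; rewrite /u conjcK enum_valK mxE enum_rankK //.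
    by rewrite Hv mxE /u conjcK mulrA.
  have S0 : 0 < S.
    rewrite lt_def sumr_ge0 ?andbT; last by move=> x _; apply: sqnorm_ge0.
    apply/eqP => /psumr_eq0P H; have {}H := H (fun x _ => sqnorm_ge0 _).
    case/rV0Pn: vnz => j vj.
    have := H (enum_val j) isT; move/eqP; rewrite mulf_eq0 conjc_eq0 orbb /u enum_valK conjc_eq0.
    by rewrite (negbTE vj).
  have := Hq u; rewrite HQ -mulrDl (pmulr_lge0 _ S0) lecE => /andP [_].
  by case: a {Hv HQ} => ar ai /= H; rewrite -subr_ge0 opprK addrC.
rewrite /Nhat; apply: (bigmax_sup_seq _ (- m%:C)); last by rewrite /= opprK.
  rewrite mem_spectrum; apply/eigenvalueP; exists (\row_i w (enum_val i)).
    apply/rowP => j; rewrite !mxE.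
    under eq_bigr => i _ do rewrite !mxE.
    by rewrite (@sum_enum _ (fun x => w x * ptA P x (enum_val j))) Hw.
  by apply/rV0Pn; exists (enum_rank x0); rewrite mxE enum_rankK.
by [].
Qed.

Lemma sum_pair (I J : finType) (F : (I * J)%type -> C) :
  \sum_x F x = \sum_i \sum_j F (i, j).
Proof. by rewrite pair_big; apply: eq_bigr => -[]. Qed.

Lemma qform_pure (TA TB : finType) (psi : (TA * TB)%type -> C) u :
  \sum_x \sum_y conjc (u x) * ptA (pure psi) x y * u y =
  \sum_a \sum_a' (\sum_b conjc (u (a, b)) * psi (a', b)) *
                 conjc (\sum_b conjc (u (a', b)) * psi (a, b)).
Proof.
rewrite sum_pair; apply: eq_bigr => a _.
under eq_bigr => b _ do rewrite sum_pair.
rewrite exchange_big; apply: eq_bigr => a' _.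
rewrite rmorph_sum mulr_suml; apply: eq_bigr => b _.
rewrite mulr_sumr; apply: eq_bigr => b' _ /=.
rewrite /ptA /pure /= rmorphM /= conjcK; ring.
Qed.

Lemma qform_trC (TA TB TC : finType) (W : (TA * (TB * TC))%type -> C) u :
  \sum_x \sum_y conjc (u x) * ptA (trC (pure W)) x y * u y =
  \sum_c \sum_x \sum_y conjc (u x) * ptA (pure (fun p => W (p.1, (p.2, c)))) x y * u y.
Proof.
rewrite [RHS]exchange_big; apply: eq_bigr => x _.
rewrite [RHS]exchange_big; apply: eq_bigr => y _.
by rewrite /ptA /trC mulr_sumr mulr_suml.
Qed.

Lemma qform_trB (TA TB TC : finType) (W : (TA * (TB * TC))%type -> C) u :
  \sum_x \sum_y conjc (u x) * ptA (trB (pure W)) x y * u y =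
  \sum_b \sum_x \sum_y conjc (u x) * ptA (pure (fun p => W (p.1, (b, p.2)))) x y * u y.
Proof.
rewrite [RHS]exchange_big; apply: eq_bigr => x _.
rewrite [RHS]exchange_big; apply: eq_bigr => y _.
by rewrite /ptA /trB mulr_sumr mulr_suml.
Qed.

Lemma nn1 (k : R) (p : C) : 0 <= k -> 0 <= k%:C * (conjc p * p).
Proof. by move=> k0; rewrite mulr_ge0 ?sqnorm_ge0 // ler0c. Qed.

Lemma nn2 (k : R) (p q : C) : 0 <= k -> 0 <= k%:C * ((conjc p + conjc q) * (p + q)).
Proof.
move=> k0; rewrite mulr_ge0 // ?ler0c //.
by have := sqnorm_ge0 (p + q); rewrite rmorphD.
Qed.

Lemma cr (x : R) : x -i* 0 = x%:C.
Proof. by rewrite oppr0. Qed.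

Lemma qAB (l0 l1 l2 : R) (u : ('I_3 * 'I_2)%type -> C) :
  0 <= l2 -> l2 <= l1 -> l1 <= l0 ->
  0 <= \sum_x \sum_y conjc (u x) * ptA (trC (pure (Omega l0 l1 l2))) x y * u y
           + (l0 * l1)%:C * \sum_x conjc (u x) * u x.
Proof.
move=> h2 h12 h01.
rewrite qform_trC.
under eq_bigr => c _ do rewrite qform_pure.
repeat first [rewrite sum_pair | rewrite big_ord_recl | rewrite big_ord0].
rewrite /= !(mulr0, mul0r, addr0, add0r, conjc0) !rmorphM /= !conjcK !cr.
set a00 := u (ord0, ord0). set a01 := u (ord0, lift ord0 ord0).
set a10 := u (lift ord0 ord0, ord0). set a11 := u (lift ord0 ord0, lift ord0 ord0).
set a20 := u (lift ord0 (lift ord0 ord0), ord0).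
set a21 := u (lift ord0 (lift ord0 ord0), lift ord0 ord0).
have HD : 0 <= (l0 * l0 + l0 * l1)%R%:C * (conjc a00 * a00) + (l1 * l1 + l0 * l1)%R%:C * (conjc a11 * a11)
   + (l0 * l1)%R%:C * ((conjc a01 + conjc a10) * (a01 + a10))
   + (l2 * l2 + l0 * l1)%R%:C * (conjc a21 * a21) + (l0 * l1)%R%:C * (conjc a20 * a20).
  by rewrite !addr_ge0 ?nn1 ?nn2 //; nra.
apply: (le_trans HD); rewrite le_eqVlt; apply/orP; left; apply/eqP.
rewrite !rmorphD !rmorphM /=; ring.
Qed.

Lemma eAB (l0 l1 l2 : R) :
  exists2 w : ('I_3 * 'I_2)%type -> C, (exists x, w x != 0) &
      forall y, \sum_x w x * ptA (trC (pure (Omega l0 l1 l2))) x y = - (l0 * l1)%:C * w y.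
Proof.
exists (fun x => if (val x.1 == 0%N) && (val x.2 == 1%N) then 1
                 else if (val x.1 == 1%N) && (val x.2 == 0%N) then -1 else 0).
  by exists (ord0, lift ord0 ord0); rewrite /= oner_eq0.
move=> [y1 y2]; rewrite /ptA /trC /pure.
repeat first [rewrite sum_pair | rewrite big_ord_recl | rewrite big_ord0].
case: y1 => [[|[|[|?]]] ?] //; case: y2 => [[|[|?]] ?] //=;
  rewrite ?cr; ring.
Qed.

Lemma qFull (l0 l1 l2 : R) (u : ('I_3 * ('I_2 * 'I_2))%type -> C) :
  0 <= l2 -> l2 <= l1 -> l1 <= l0 ->
  0 <= \sum_x \sum_y conjc (u x) * ptA (pure (Omega l0 l1 l2)) x y * u y
           + (l0 * l1)%:C * \sum_x conjc (u x) * u x.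
Proof.
move=> h2 h12 h01.
rewrite qform_pure.
repeat first [rewrite sum_pair | rewrite big_ord_recl | rewrite big_ord0].
rewrite /= !(mulr0, mul0r, addr0, add0r, conjc0) !rmorphM /= !conjcK !cr.
set a000 := u (ord0, (ord0, ord0)).
set a001 := u (ord0, (ord0, lift ord0 ord0)).
set a010 := u (ord0, (lift ord0 ord0, ord0)).
set a011 := u (ord0, (lift ord0 ord0, lift ord0 ord0)).
set a100 := u (lift ord0 ord0, (ord0, ord0)).
set a101 := u (lift ord0 ord0, (ord0, lift ord0 ord0)).
set a110 := u (lift ord0 ord0, (lift ord0 ord0, ord0)).
set a111 := u (lift ord0 ord0, (lift ord0 ord0, lift ord0 ord0)).
set a200 := u (lift ord0 (lift ord0 ord0), (ord0, ord0)).
set a201 := u (lift ord0 (lift ord0 ord0), (ord0, lift ord0 ord0)).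
set a210 := u (lift ord0 (lift ord0 ord0), (lift ord0 ord0, ord0)).
set a211 := u (lift ord0 (lift ord0 ord0), (lift ord0 ord0, lift ord0 ord0)).
have HD : 0 <= (l0 * l0 + l0 * l1)%R%:C * (conjc a000 * a000)
   + (l1 * l1 + l0 * l1)%R%:C * (conjc a110 * a110)
   + (l2 * l2 + l0 * l1)%R%:C * (conjc a211 * a211)
   + (l0 * l1)%R%:C * ((conjc a010 + conjc a100) * (a010 + a100))
   + (l0 * l2)%R%:C * ((conjc a011 + conjc a200) * (a011 + a200))
   + (l0 * (l1 - l2))%R%:C * (conjc a011 * a011)
   + (l0 * (l1 - l2))%R%:C * (conjc a200 * a200)
   + (l1 * l2)%R%:C * ((conjc a111 + conjc a210) * (a111 + a210))
   + (l1 * (l0 - l2))%R%:C * (conjc a111 * a111)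
   + (l1 * (l0 - l2))%R%:C * (conjc a210 * a210)
   + (l0 * l1)%R%:C * (conjc a001 * a001)
   + (l0 * l1)%R%:C * (conjc a101 * a101)
   + (l0 * l1)%R%:C * (conjc a201 * a201).
  by rewrite !addr_ge0 ?nn1 ?nn2 //; nra.
apply: (le_trans HD); rewrite le_eqVlt; apply/orP; left; apply/eqP.
rewrite !rmorphD ?rmorphN !rmorphM /=; ring.
Qed.

Lemma eFull (l0 l1 l2 : R) :
  exists2 w : ('I_3 * ('I_2 * 'I_2))%type -> C, (exists x, w x != 0) &
      forall y, \sum_x w x * ptA (pure (Omega l0 l1 l2)) x y = - (l0 * l1)%:C * w y.
Proof.
exists (fun x => if [&& val x.1 == 0%N, val x.2.1 == 1%N & val x.2.2 == 0%N] then 1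
                 else if [&& val x.1 == 1%N, val x.2.1 == 0%N & val x.2.2 == 0%N] then -1 else 0).
  by exists (ord0, (lift ord0 ord0, ord0)); rewrite /= oner_eq0.
move=> [y1 [y2 y3]]; rewrite /ptA /pure.
repeat first [rewrite sum_pair | rewrite big_ord_recl | rewrite big_ord0].
case: y1 => [[|[|[|?]]] ?] //; case: y2 => [[|[|?]] ?] //; case: y3 => [[|[|?]] ?] //=;
  rewrite ?cr; ring.
Qed.

Lemma qAC (l0 l1 l2 : R) (u : ('I_3 * 'I_2)%type -> C) :
  0 <= l2 -> l2 <= l1 -> l1 <= l0 ->
  0 <= \sum_x \sum_y conjc (u x) * ptA (trB (pure (Omega l0 l1 l2))) x y * u y
           + (l1 * l2)%:C * \sum_x conjc (u x) * u x.
Proof.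
move=> h2 h12 h01.
rewrite qform_trB.
under eq_bigr => c _ do rewrite qform_pure.
repeat first [rewrite sum_pair | rewrite big_ord_recl | rewrite big_ord0].
rewrite /= !(mulr0, mul0r, addr0, add0r, conjc0) !rmorphM /= !conjcK !cr.
set a00 := u (ord0, ord0). set a01 := u (ord0, lift ord0 ord0).
set a10 := u (lift ord0 ord0, ord0). set a11 := u (lift ord0 ord0, lift ord0 ord0).
set a20 := u (lift ord0 (lift ord0 ord0), ord0).
set a21 := u (lift ord0 (lift ord0 ord0), lift ord0 ord0).
have HD : 0 <= (l0 * l0 + l1 * l2)%R%:C * (conjc a00 * a00)
   + (l1 * l1 + l1 * l2)%R%:C * (conjc a10 * a10)
   + (l2 * l2 + l1 * l2)%R%:C * (conjc a21 * a21)
   + (l1 * l2)%R%:C * ((conjc a11 + conjc a20) * (a11 + a20))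
   + (l1 * l2)%R%:C * (conjc a01 * a01).
  by rewrite !addr_ge0 ?nn1 ?nn2 //; nra.
apply: (le_trans HD); rewrite le_eqVlt; apply/orP; left; apply/eqP.
rewrite !rmorphD !rmorphM /=; ring.
Qed.

Lemma eAC (l0 l1 l2 : R) :
  exists2 w : ('I_3 * 'I_2)%type -> C, (exists x, w x != 0) &
      forall y, \sum_x w x * ptA (trB (pure (Omega l0 l1 l2))) x y = - (l1 * l2)%:C * w y.
Proof.
exists (fun x => if (val x.1 == 1%N) && (val x.2 == 1%N) then 1
                 else if (val x.1 == 2%N) && (val x.2 == 0%N) then -1 else 0).
  by exists (lift ord0 ord0, lift ord0 ord0); rewrite /= oner_eq0.
move=> [y1 y2]; rewrite /ptA /trB /pure.
repeat first [rewrite sum_pair | rewrite big_ord_recl | rewrite big_ord0].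
case: y1 => [[|[|[|?]]] ?] //; case: y2 => [[|[|?]] ?] //=;
  rewrite ?cr; ring.
Qed.


Lemma pure_density (l0 l1 l2 : R) : l0 ^+ 2 + l1 ^+ 2 + l2 ^+ 2 = 1 ->
  is_density (pure (Omega l0 l1 l2)).
Proof.
move=> hn; split.
- by move=> x y; rewrite /pure rmorphM /= conjcK mulrC.
- move=> v.
  have -> : \sum_x \sum_y conjc (v x) * pure (Omega l0 l1 l2) x y * v y =
     (\sum_x conjc (v x) * Omega l0 l1 l2 x) * conjc (\sum_x conjc (v x) * Omega l0 l1 l2 x).
    rewrite mulr_suml; apply: eq_bigr => x _.
    rewrite rmorph_sum mulr_sumr; apply: eq_bigr => y _.
    rewrite /pure rmorphM /= conjcK; ring.
  exact: mulcJ_ge0.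
- rewrite /pure.
  repeat first [rewrite sum_pair | rewrite big_ord_recl | rewrite big_ord0].
  rewrite /= !(mulr0, mul0r, addr0, add0r, conjc0) ?cr.
  have <- : (l0 ^+ 2 + l1 ^+ 2 + l2 ^+ 2)%:C = 1 :> C by rewrite hn.
  rewrite !rmorphD !rmorphXn /=; ring.
Qed.

End G.

Theorem mainTheorem5 (R : realType) (l0 l1 l2 : R) :
  l1 <= l0 -> l2 <= l1 -> 0 < l2 -> l0 ^+ 2 + l1 ^+ 2 + l2 ^+ 2 = 1 ->
  let rho := pure (Omega l0 l1 l2) in
  [/\ Nhat_l rho = Nhat_l (trC rho),
      Nhat_l (trC rho) = log2 (1 + l0 * l1),
      Nhat_l (trB rho) = log2 (1 + l1 * l2),
      0 < log2 (1 + l1 * l2)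
    & ~ monogamous (@Nhat_l R)].
Proof.
move=> h01 h12 h2 hn rho.
have h2' : 0 <= l2 by apply: ltW.
have N1 : Nhat rho = l0 * l1.
  apply: Nhat_char; first by nra.
    exact: eFull.
  by move=> u; apply: qFull.
have N2 : Nhat (trC rho) = l0 * l1.
  apply: Nhat_char; first by nra.
    exact: eAB.
  by move=> u; apply: qAB.
have N3 : Nhat (trB rho) = l1 * l2.
  apply: Nhat_char; first by nra.
    exact: eAC.
  by move=> u; apply: qAC.
have pos : 0 < log2 (1 + l1 * l2).
  rewrite /log2 divr_gt0 // ln_gt0 // ?ltr1n //.
  by rewrite ltrDl; nra.
split => //.
- by rewrite /Nhat_l N1 N2.
- by rewrite /Nhat_l N2 addrC.
- by rewrite /Nhat_l N3 addrC.
move=> H.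
have := H _ _ _ rho (@pure_density R _ _ _ hn).
rewrite /Nhat_l N1 N2 => /(_ erefl).
by rewrite N3 addrC => E; move: pos; rewrite E ltxx.
Qed.
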